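(* Let $X$ be a separable Fréchet space and $p$ a non-trivial continuous seminorm on $X$. Then for every dense countable set $A\subseteq X$ there is $B\subseteq A$ such that $B$ is $p$-independent and dense in $X$.
   Context: A Fréchet space is a complete metrizable locally convex (Hausdorff) space over $\mathbb{K}\in\{\mathbb{R},\mathbb{C}\}$. For a seminorm $p$, $\ker p=\{x:p(x)=0\}$; $p$ is non-trivial if $X/\ker p$ is infinite dimensional. A set $A\subseteq X$ is $p$-independent if $p(z_1a_1+\dots+z_na_n)\neq0$ for every $n\in\mathbb{N}$, pairwise distinct $a_1,\dots,a_n\in A$ and nonzero $z_1,\dots,z_n\in\mathbb{K}$. *)

(* Defs.v *)
From Stdlib Require Import Reals.
Open Scope R_scope.
Set Implicit Arguments.

Record Scalars := {
  sc :> Type;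
  s0 : sc;
  s1 : sc;
  sadd : sc -> sc -> sc;
  smul : sc -> sc -> sc;
  sopp : sc -> sc;
  sabs : sc -> R
}.

Definition RK : Scalars :=
  {| sc := R; s0 := 0; s1 := 1; sadd := Rplus; smul := Rmult; sopp := Ropp;
     sabs := Rabs |}.

Definition Cplx : Type := (R * R)%type.
Definition Cadd (z w : Cplx) : Cplx := (fst z + fst w, snd z + snd w).
Definition Cmul (z w : Cplx) : Cplx :=
  (fst z * fst w - snd z * snd w, fst z * snd w + snd z * fst w).
Definition Copp (z : Cplx) : Cplx := (- fst z, - snd z).
Definition Cmod (z : Cplx) : R := sqrt (fst z * fst z + snd z * snd z).

Definition CK : Scalars :=
  {| sc := Cplx; s0 := (0, 0); s1 := (1, 0); sadd := Cadd; smul := Cmul;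
     sopp := Copp; sabs := Cmod |}.

Record VectorSpace (K : Scalars) := {
  vcar :> Type;
  vzero : vcar;
  vadd : vcar -> vcar -> vcar;
  vopp : vcar -> vcar;
  vscal : sc K -> vcar -> vcar;
  vaddA : forall x y z, vadd x (vadd y z) = vadd (vadd x y) z;
  vaddC : forall x y, vadd x y = vadd y x;
  vadd0 : forall x, vadd x vzero = x;
  vaddN : forall x, vadd x (vopp x) = vzero;
  vscal1 : forall x, vscal (s1 K) x = x;
  vscalA : forall a b x, vscal a (vscal b x) = vscal (smul K a b) x;
  vscalDv : forall a x y, vscal a (vadd x y) = vadd (vscal a x) (vscal a y);
  vscalDs : forall a b x, vscal (sadd K a b) x = vadd (vscal a x) (vscal b x)
}.

Arguments vzero {K} v.
Arguments vadd {K v}.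
Arguments vopp {K v}.
Arguments vscal {K v}.

Section Defs.
Variable K : Scalars.
Variable X : VectorSpace K.

Definition vsub (x y : X) : X := vadd x (vopp y).

Fixpoint vsum (n : nat) (f : nat -> X) : X :=
  match n with
  | O => vzero X
  | S m => vadd (vsum m f) (f m)
  end.

Definition is_seminorm (p : X -> R) : Prop :=
  (forall x y, p (vadd x y) <= p x + p y) /\
  (forall (a : sc K) x, p (vscal a x) = sabs K a * p x).

Definition is_open (q : nat -> X -> R) (U : X -> Prop) : Prop :=
  forall x, U x -> exists n eps, 0 < eps /\
    forall y, (forall k, (k <= n)%nat -> q k (vsub y x) < eps) -> U y.

Definition dense (q : nat -> X -> R) (B : X -> Prop) : Prop :=
  forall U, is_open q U -> (exists x, U x) -> exists b, B b /\ U b.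

Definition countable (D : X -> Prop) : Prop :=
  exists f : nat -> X, forall x, D x -> exists n, f n = x.

Definition separable (q : nat -> X -> R) : Prop :=
  exists D, countable D /\ dense q D.

Definition is_frechet (q : nat -> X -> R) : Prop :=
  (forall n, is_seminorm (q n)) /\
  (forall x, (forall n, q n x = 0) -> x = vzero X) /\
  (forall u : nat -> X,
     (forall n eps, 0 < eps -> exists N, forall i j, (N <= i)%nat -> (N <= j)%nat ->
        q n (vsub (u i) (u j)) < eps) ->
     exists x, forall n eps, 0 < eps -> exists N, forall i, (N <= i)%nat ->
        q n (vsub (u i) x) < eps).

Definition continuous_fun (q : nat -> X -> R) (p : X -> R) : Prop :=
  forall x eps, 0 < eps -> exists n delta, 0 < delta /\
    forall y, (forall k, (k <= n)%nat -> q k (vsub y x) < delta) ->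
      Rabs (p y - p x) < eps.

(** X / ker p infinite dimensional: for every n there are n vectors whose
    classes in X / ker p are linearly independent. *)
Definition nontrivial (p : X -> R) : Prop :=
  forall n, exists a : nat -> X, forall z : nat -> sc K,
    p (vsum n (fun i => vscal (z i) (a i))) = 0 ->
    forall i, (i < n)%nat -> z i = s0 K.

Definition p_independent (p : X -> R) (B : X -> Prop) : Prop :=
  forall (n : nat) (a : nat -> X) (z : nat -> sc K),
    (1 <= n)%nat ->
    (forall i, (i < n)%nat -> B (a i)) ->
    (forall i j, (i < n)%nat -> (j < n)%nat -> i <> j -> a i <> a j) ->
    (forall i, (i < n)%nat -> z i <> s0 K) ->
    p (vsum n (fun i => vscal (z i) (a i))) <> 0.

End Defs.

Arguments vsub {K X}.
Arguments vsum {K X}.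
Arguments is_seminorm {K X}.
Arguments is_open {K X}.
Arguments dense {K X}.
Arguments countable {K X}.
Arguments separable {K} X.
Arguments is_frechet {K X}.
Arguments continuous_fun {K X}.
Arguments nontrivial {K X}.
Arguments p_independent {K X}.

(* Main.v *)
Require Import Defs.
From Stdlib Require Import Reals Lra Lia Classical IndefiniteDescription Cantor.
Open Scope R_scope.
Set Implicit Arguments.

Record Kfield (K : Scalars) : Type := {
  kinv : sc K -> sc K;
  kemb : R -> sc K;
  k_addC : forall a b, sadd K a b = sadd K b a;
  k_addA : forall a b c, sadd K a (sadd K b c) = sadd K (sadd K a b) c;
  k_add0 : forall a, sadd K (s0 K) a = a;
  k_addN : forall a, sadd K a (sopp K a) = s0 K;
  k_mulC : forall a b, smul K a b = smul K b a;
  k_mulA : forall a b c, smul K a (smul K b c) = smul K (smul K a b) c;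
  k_mul1 : forall a, smul K (s1 K) a = a;
  k_distr : forall a b c, smul K (sadd K a b) c = sadd K (smul K a c) (smul K b c);
  k_10 : s1 K <> s0 K;
  k_inv : forall a, a <> s0 K -> smul K a (kinv a) = s1 K;
  k_abs0 : sabs K (s0 K) = 0;
  k_abs_eq0 : forall a, sabs K a = 0 -> a = s0 K;
  k_abs_ge0 : forall a, 0 <= sabs K a;
  k_abs_mul : forall a b, sabs K (smul K a b) = sabs K a * sabs K b;
  k_abs_opp : forall a, sabs K (sopp K a) = sabs K a;
  k_abs1 : sabs K (s1 K) = 1;
  k_emb : forall r, 0 <= r -> sabs K (kemb r) = r;
  k_compact : forall (D : sc K -> R) (L M : R),
     (forall t, 0 <= D t) ->
     (forall t t', D t <= D t' + L * sabs K (sadd K t (sopp K t'))) ->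
     (forall eps, 0 < eps -> exists t, sabs K t <= M /\ D t < eps) ->
     exists t, D t <= 0
}.

Arguments vaddA {K v}. Arguments vaddC {K v}. Arguments vadd0 {K v}. Arguments vaddN {K v}.
Arguments vscal1 {K v}. Arguments vscalA {K v}. Arguments vscalDv {K v}. Arguments vscalDs {K v}.

Unset Implicit Arguments.
Section Gen.
Variable K : Scalars.
Variable KF : Kfield K.

Definition Kth : ring_theory (s0 K) (s1 K) (sadd K) (smul K)
  (fun a b => sadd K a (sopp K b)) (sopp K) eq.
Proof.
  constructor; intros; try reflexivity.
  - apply (k_add0 KF).
  - apply (k_addC KF).
  - apply (k_addA KF).
  - apply (k_mul1 KF).
  - apply (k_mulC KF).
  - apply (k_mulA KF).
  - apply (k_distr KF).
  - apply (k_addN KF).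
Qed.
Add Ring Kring : Kth.

Variable X : VectorSpace K.

Lemma v_add0l (x : X) : vadd (vzero X) x = x.
Proof. rewrite vaddC. apply vadd0. Qed.

Lemma v_cancel (x y z : X) : vadd x y = vadd x z -> y = z.
Proof.
  intro H. assert (H2 : vadd (vopp x) (vadd x y) = vadd (vopp x) (vadd x z)) by (rewrite H; auto).
  rewrite !vaddA in H2. rewrite (vaddC (vopp x) x), vaddN, !v_add0l in H2. exact H2.
Qed.

Lemma v_scal0 (x : X) : vscal (s0 K) x = vzero X.
Proof.
  apply (v_cancel (vscal (s0 K) x)). rewrite vadd0, <- vscalDs.
  f_equal. ring.
Qed.

Lemma v_scalz (a : sc K) : vscal a (vzero X) = vzero X.
Proof.
  apply (v_cancel (vscal a (vzero X))). rewrite vadd0, <- vscalDv, vadd0. auto.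
Qed.

Lemma v_opp_unique (x y : X) : vadd x y = vzero X -> y = vopp x.
Proof. intro H. apply (v_cancel x). rewrite H, vaddN. auto. Qed.

Lemma v_scal_opp (a : sc K) (x : X) : vscal (sopp K a) x = vopp (vscal a x).
Proof.
  apply v_opp_unique. rewrite <- vscalDs.
  replace (sadd K a (sopp K a)) with (s0 K) by ring. apply v_scal0.
Qed.

Lemma v_opp_scal (x : X) : vopp x = vscal (sopp K (s1 K)) x.
Proof. rewrite v_scal_opp, vscal1. auto. Qed.

Lemma v_opp_add (x y : X) : vopp (vadd x y) = vadd (vopp x) (vopp y).
Proof. rewrite !v_opp_scal. apply vscalDv. Qed.

Lemma v_opp_opp (x : X) : vopp (vopp x) = x.
Proof. symmetry. apply v_opp_unique. rewrite vaddC. apply vaddN. Qed.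

Lemma v_opp0 : vopp (vzero X) = vzero X.
Proof. rewrite v_opp_scal. apply v_scalz. Qed.

Lemma v_add4 (a b c d : X) : vadd (vadd a b) (vadd c d) = vadd (vadd a c) (vadd b d).
Proof.
  rewrite <- !vaddA. f_equal. rewrite !vaddA. f_equal. apply vaddC.
Qed.

Lemma v_sub_add (a b c d : X) : vsub (vadd a b) (vadd c d) = vadd (vsub a c) (vsub b d).
Proof. unfold vsub. rewrite v_opp_add. apply v_add4. Qed.

Lemma v_sub_scal (a : sc K) (x y : X) : vscal a (vsub x y) = vsub (vscal a x) (vscal a y).
Proof. unfold vsub. rewrite vscalDv, !v_opp_scal, !vscalA. f_equal. f_equal. ring. Qed.

Lemma v_subv (x : X) : vsub x x = vzero X.
Proof. apply vaddN. Qed.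

Lemma v_sub0 (x : X) : vsub x (vzero X) = x.
Proof. unfold vsub. rewrite v_opp0. apply vadd0. Qed.

Lemma v_add_sub (x y : X) : vsub (vadd x y) x = y.
Proof. unfold vsub. rewrite vaddC, vaddA, (vaddC (vopp x)), vaddN. apply v_add0l. Qed.

Lemma v_sub_sub (x y z : X) : vsub x (vadd y z) = vsub (vsub x y) z.
Proof. unfold vsub. rewrite v_opp_add. apply vaddA. Qed.

Lemma v_scal_sub_s (a b : sc K) (x : X) :
  vscal (sadd K a (sopp K b)) x = vsub (vscal a x) (vscal b x).
Proof. rewrite vscalDs, v_scal_opp. auto. Qed.

Lemma v_sub_opp (x y : X) : vsub x y = vopp (vsub y x).
Proof. unfold vsub. rewrite v_opp_add, v_opp_opp, vaddC. auto. Qed.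

Lemma v_sub_mid (x y z : X) : vsub x z = vadd (vsub x y) (vsub y z).
Proof.
  unfold vsub. rewrite <- vaddA. f_equal. rewrite vaddA, (vaddC (vopp y)), vaddN, v_add0l. auto.
Qed.

Lemma vsum_ext (n : nat) (f g : nat -> X) :
  (forall i, (i < n)%nat -> f i = g i) -> vsum n f = vsum n g.
Proof.
  induction n; intros H; simpl; auto. rewrite IHn by (intros; apply H; lia). rewrite H by lia. auto.
Qed.

Lemma vsum_add (n : nat) (f g : nat -> X) :
  vsum n (fun i => vadd (f i) (g i)) = vadd (vsum n f) (vsum n g).
Proof.
  induction n; simpl. { rewrite vadd0; auto. }
  rewrite IHn. apply v_add4.
Qed.

Lemma vsum_scal (a : sc K) (n : nat) (f : nat -> X) :
  vscal a (vsum n f) = vsum n (fun i => vscal a (f i)).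
Proof.
  induction n; simpl. { apply v_scalz. } rewrite vscalDv, IHn. auto.
Qed.

Lemma vsum_zero (n : nat) : vsum n (fun _ => vzero X) = vzero X.
Proof. induction n; simpl; auto. rewrite IHn. apply vadd0. Qed.

Lemma vsum_zero' (n : nat) (f : nat -> X) :
  (forall i, (i < n)%nat -> f i = vzero X) -> vsum n f = vzero X.
Proof. intro H. transitivity (vsum n (fun _ => vzero X)); [apply vsum_ext; auto | apply vsum_zero]. Qed.

Lemma vsum_sub (n : nat) (f g : nat -> X) :
  vsum n (fun i => vsub (f i) (g i)) = vsub (vsum n f) (vsum n g).
Proof.
  unfold vsub. rewrite vsum_add. f_equal. rewrite !v_opp_scal, vsum_scal. auto.
  apply vsum_ext; intros; rewrite v_opp_scal; auto.
Qed.

Lemma vsum_swap (n k : nat) (g : nat -> nat -> X) :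
  vsum n (fun j => vsum k (fun i => g j i)) = vsum k (fun i => vsum n (fun j => g j i)).
Proof.
  induction n; simpl. { symmetry. apply vsum_zero. }
  rewrite IHn. rewrite <- vsum_add. auto.
Qed.

Lemma vsum_ind (n j0 : nat) (w : X) : (j0 < n)%nat ->
  vsum n (fun j => if Nat.eqb j j0 then w else vzero X) = w.
Proof.
  induction n; intros H; [lia|]. simpl.
  destruct (Nat.eqb n j0) eqn:E.
  - apply Nat.eqb_eq in E. subst. rewrite vsum_zero'. apply v_add0l.
    intros i Hi. destruct (Nat.eqb i j0) eqn:E2; auto. apply Nat.eqb_eq in E2; lia.
  - apply Nat.eqb_neq in E. rewrite IHn by lia. apply vadd0.
Qed.

Definition lc (k : nat) (c : nat -> sc K) (b : nat -> X) : X :=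
  vsum k (fun i => vscal (c i) (b i)).

Lemma lc_ext k c d b b' : (forall i, (i < k)%nat -> c i = d i /\ b i = b' i) -> lc k c b = lc k d b'.
Proof. intro H. unfold lc. apply vsum_ext. intros i Hi. destruct (H i Hi) as [-> ->]. auto. Qed.

Lemma lc_add k c d b : lc k (fun i => sadd K (c i) (d i)) b = vadd (lc k c b) (lc k d b).
Proof. unfold lc. rewrite <- vsum_add. apply vsum_ext. intros. apply vscalDs. Qed.

Lemma lc_scal a k c b : vscal a (lc k c b) = lc k (fun i => smul K a (c i)) b.
Proof. unfold lc. rewrite vsum_scal. apply vsum_ext. intros. apply vscalA. Qed.

Lemma lc_S k c b : lc (S k) c b = vadd (lc k c b) (vscal (c k) (b k)).
Proof. reflexivity. Qed.

Lemma lc_zero k b : lc k (fun _ => s0 K) b = vzero X.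
Proof. unfold lc. apply vsum_zero'. intros. apply v_scal0. Qed.

Lemma lc_sub k c d b : lc k (fun i => sadd K (c i) (sopp K (d i))) b = vsub (lc k c b) (lc k d b).
Proof. unfold lc. rewrite <- vsum_sub. apply vsum_ext. intros. apply v_scal_sub_s. Qed.

Fixpoint ssum (n : nat) (f : nat -> sc K) : sc K :=
  match n with O => s0 K | S m => sadd K (ssum m f) (f m) end.

Lemma ssum_S n f : ssum (S n) f = sadd K (ssum n f) (f n).
Proof. reflexivity. Qed.

Lemma ssum_ext n f g : (forall i, (i < n)%nat -> f i = g i) -> ssum n f = ssum n g.
Proof. induction n; intros H; simpl; auto. rewrite IHn by (intros; apply H; lia). rewrite H by lia. auto. Qed.

Lemma ssum_add n f g : ssum n (fun i => sadd K (f i) (g i)) = sadd K (ssum n f) (ssum n g).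
Proof. induction n; simpl. ring. rewrite IHn. ring. Qed.

Lemma ssum_scal a n f : smul K a (ssum n f) = ssum n (fun i => smul K a (f i)).
Proof. induction n; simpl. ring. rewrite <- IHn. ring. Qed.

Lemma ssum_zero n f : (forall i, (i < n)%nat -> f i = s0 K) -> ssum n f = s0 K.
Proof. induction n; intros H; simpl; auto. rewrite IHn by (intros; apply H; lia). rewrite H by lia. ring. Qed.

Lemma ssum_ind n j0 c : (j0 < n)%nat -> ssum n (fun j => if Nat.eqb j j0 then c else s0 K) = c.
Proof.
  induction n; intros H; [lia|]. simpl.
  destruct (Nat.eqb n j0) eqn:E.
  - apply Nat.eqb_eq in E. subst. rewrite ssum_zero. ring.
    intros i Hi. destruct (Nat.eqb i j0) eqn:E2; auto. apply Nat.eqb_eq in E2; lia.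
  - apply Nat.eqb_neq in E. rewrite IHn by lia. ring.
Qed.

Lemma k_integral a b : a <> s0 K -> b <> s0 K -> smul K a b <> s0 K.
Proof.
  intros Ha Hb H. apply Hb.
  transitivity (smul K (smul K (kinv KF a) a) b).
  - rewrite (k_mulC KF (kinv KF a)), (k_inv KF Ha). ring.
  - rewrite <- (k_mulA KF), H. ring.
Qed.

Definition mx_concl (k : nat) (m : nat -> nat -> sc K) (z : nat -> sc K) :=
  (exists j, (j <= k)%nat /\ z j <> s0 K) /\
  (forall i, (i < k)%nat -> ssum (S k) (fun j => smul K (z j) (m j i)) = s0 K).

Lemma mx_pivot k m :
  (forall m', exists z, mx_concl k m' z) ->
  m (S k) k <> s0 K -> exists z, mx_concl (S k) m z.
Proof.
  intros IH Hp.
  destruct (IH (fun j i => sadd K (smul K (m (S k) k) (m j i)) (sopp K (smul K (m j k) (m (S k) i)))))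
    as [w [[j [Hj Hw]] Hs]].
  exists (fun j => if Nat.eqb j (S k) then sopp K (ssum (S k) (fun j => smul K (w j) (m j k)))
                   else smul K (m (S k) k) (w j)).
  split.
  - exists j. split; [lia|]. destruct (Nat.eqb j (S k)) eqn:E. apply Nat.eqb_eq in E; lia.
    apply k_integral; auto.
  - intros i Hi. rewrite (ssum_S (S k)); cbv beta. rewrite Nat.eqb_refl.
    rewrite (ssum_ext (S k) _ (fun j => smul K (m (S k) k) (smul K (w j) (m j i)))).
    2:{ intros j' Hj'. destruct (Nat.eqb j' (S k)) eqn:E. apply Nat.eqb_eq in E; lia. ring. }
    rewrite <- ssum_scal.
    assert (Hik : (i < k)%nat \/ i = k) by lia. destruct Hik as [Hik | Hik]; [|subst i].
    + specialize (Hs i Hik).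
      rewrite (ssum_ext (S k) _ (fun j => sadd K (smul K (m (S k) k) (smul K (w j) (m j i)))
                   (sopp K (smul K (m (S k) i) (smul K (w j) (m j k)))))) in Hs by (intros; ring).
      rewrite ssum_add in Hs.
      rewrite <- ssum_scal in Hs.
      rewrite (ssum_ext (S k) (fun j => sopp K _) (fun j => smul K (sopp K (m (S k) i)) (smul K (w j) (m j k)))) in Hs by (intros; ring).
      rewrite <- ssum_scal in Hs.
      etransitivity; [|exact Hs]. ring.
    + ring.
Qed.

Lemma mx_lemma k : forall m, exists z, mx_concl k m z.
Proof.
  induction k; intro m.
  - exists (fun _ => s1 K). split. exists 0%nat. split; auto. apply (k_10 KF). intros; lia.
  - destruct (classic (forall j, (j <= S k)%nat -> m j k = s0 K)) as [H1|H1].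
    + destruct (IHk m) as [z [[j [Hj Hz]] Hs]].
      exists (fun j => if Nat.eqb j (S k) then s0 K else z j). split.
      * exists j. split; [lia|]. destruct (Nat.eqb j (S k)) eqn:E; auto. apply Nat.eqb_eq in E; lia.
      * intros i Hi. rewrite (ssum_S (S k)); cbv beta. rewrite Nat.eqb_refl.
        assert (Hik : (i < k)%nat \/ i = k) by lia. destruct Hik as [Hik | Hik]; [|subst i].
        -- rewrite (ssum_ext (S k) _ (fun j => smul K (z j) (m j i))), (Hs i Hik). ring.
           intros j' Hj'. destruct (Nat.eqb j' (S k)) eqn:E; auto. apply Nat.eqb_eq in E; lia.
        -- rewrite ssum_zero. ring. intros j' Hj'. rewrite H1 by lia. ring.
    + destruct (classic (m (S k) k = s0 K)) as [H2|H2].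
      2:{ apply mx_pivot; auto. }
      assert (H3 : exists j0, (j0 <= k)%nat /\ m j0 k <> s0 K).
      { apply NNPP. intro Hn. apply H1. intros j Hj.
        destruct (Nat.eq_dec j (S k)) as [->|Hne]; auto.
        apply NNPP. intro Hm. apply Hn. exists j. split; auto. lia. }
      destruct H3 as [j0 [Hj0 Hm0]].
      destruct (mx_pivot k (fun j i => if Nat.eqb j (S k) then sadd K (m (S k) i) (m j0 i) else m j i) IHk)
        as [z [[j [Hj Hz]] Hs]].
      { rewrite Nat.eqb_refl, H2. rewrite (k_add0 KF). auto. }
      exists (fun j => if Nat.eqb j (S k) then z (S k) else
                        sadd K (z j) (if Nat.eqb j j0 then z (S k) else s0 K)).
      split.
      * destruct (classic (z (S k) = s0 K)) as [Hzs|Hzs].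
        -- exists j. assert (j <> S k) by (intro; subst; auto).
           split; [lia|]. destruct (Nat.eqb j (S k)) eqn:E. apply Nat.eqb_eq in E; lia.
           destruct (Nat.eqb j j0); rewrite ?Hzs; intro C; apply Hz; rewrite <- C; ring.
        -- exists (S k). rewrite Nat.eqb_refl. auto.
      * intros i Hi. etransitivity; [|exact (Hs i Hi)]. rewrite !(ssum_S (S k)); cbv beta. rewrite !Nat.eqb_refl.
        rewrite (ssum_ext (S k) (fun j => smul K (if Nat.eqb j (S k) then _ else _) _)
                  (fun j => sadd K (smul K (z j) (m j i)) (if Nat.eqb j j0 then smul K (z (S k)) (m j0 i) else s0 K))).
        2:{ intros j' Hj'. destruct (Nat.eqb j' (S k)) eqn:E. apply Nat.eqb_eq in E; lia.
            destruct (Nat.eqb j' j0) eqn:E2. apply Nat.eqb_eq in E2; subst; ring. ring. }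
        rewrite ssum_add, ssum_ind by lia.
        rewrite (ssum_ext (S k) (fun j => smul K (z j) (if Nat.eqb j (S k) then _ else _))
                  (fun j => smul K (z j) (m j i))).
        2:{ intros j' Hj'. destruct (Nat.eqb j' (S k)) eqn:E. apply Nat.eqb_eq in E; lia. auto. }
        ring.
Qed.
Section SN.
Variable p : X -> R.
Variable Hp : is_seminorm p.

Lemma p_tri x y : p (vadd x y) <= p x + p y.
Proof. apply (proj1 Hp). Qed.
Lemma p_scal a x : p (vscal a x) = sabs K a * p x.
Proof. apply (proj2 Hp). Qed.
Lemma p_zero : p (vzero X) = 0.
Proof. rewrite <- (v_scal0 (vzero X)), p_scal, (k_abs0 KF). ring. Qed.
Lemma p_opp x : p (vopp x) = p x.
Proof. rewrite v_opp_scal, p_scal, (k_abs_opp KF), (k_abs1 KF). ring. Qed.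
Lemma p_ge0 x : 0 <= p x.
Proof. pose proof (p_tri x (vopp x)). rewrite vaddN, p_zero, p_opp in H. lra. Qed.
Lemma p_sym x y : p (vsub x y) = p (vsub y x).
Proof. rewrite v_sub_opp, p_opp. auto. Qed.
Lemma p_mid x y z : p (vsub x z) <= p (vsub x y) + p (vsub y z).
Proof. rewrite (v_sub_mid x y z). apply p_tri. Qed.
Lemma p_sub x y : p (vsub x y) <= p x + p y.
Proof. unfold vsub. rewrite <- (p_opp y). apply p_tri. Qed.
Lemma p_rev x y : p x - p y <= p (vsub x y).
Proof. pose proof (p_mid x (vzero X) y). rewrite v_sub0 in H.
  unfold vsub at 2 in H. rewrite v_add0l, p_opp in H.
  pose proof (p_mid x y (vzero X)). rewrite !v_sub0 in H0. lra. Qed.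
Lemma p_vsum0 n f : (forall i, (i < n)%nat -> p (f i) = 0) -> p (vsum n f) = 0.
Proof.
  induction n; intro H; simpl. apply p_zero.
  pose proof (p_tri (vsum n f) (f n)). rewrite IHn, H in H0 by (auto; intros; apply H; lia).
  pose proof (p_ge0 (vadd (vsum n f) (f n))). lra.
Qed.

End SN.

Variable p : X -> R.
Variable Hp : is_seminorm p.

Definition exactk k b y := exists c, p (vsub y (lc k c b)) = 0.
Definition approxk k b y := forall eps, 0 < eps -> exists c, p (vsub y (lc k c b)) < eps.

Lemma v_addsub (a s : X) : vadd (vsub a s) s = a.
Proof. unfold vsub. rewrite <- vaddA, (vaddC (vopp s)), vaddN. apply vadd0. Qed.

Lemma vscal_ssum n f (x : X) : vscal (ssum n f) x = vsum n (fun j => vscal (f j) x).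
Proof. induction n; simpl. apply v_scal0. rewrite vscalDs, IHn. auto. Qed.

Lemma dim_lemma (Hnt : nontrivial p) k b : exists v, ~ exactk k b v.
Proof.
  apply NNPP. intro Hn.
  assert (H : forall v, exists c, p (vsub v (lc k c b)) = 0).
  { intro v. apply NNPP. intro H. apply Hn. exists v. exact H. }
  destruct (functional_choice _ H) as [m Hm].
  destruct (Hnt (S k)) as [a Ha].
  destruct (mx_lemma k (fun j i => m (a j) i)) as [z [[j [Hj Hz]] Hs]].
  apply Hz. apply (Ha z); [|lia].
  transitivity (p (vadd (vsum (S k) (fun j => vscal (z j) (vsub (a j) (lc k (m (a j)) b))))
                        (vsum (S k) (fun j => vscal (z j) (lc k (m (a j)) b))))).
  { f_equal. rewrite <- vsum_add. apply vsum_ext. intros. rewrite <- vscalDv.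
    rewrite v_addsub. auto. }
  assert (E : vsum (S k) (fun j => vscal (z j) (lc k (m (a j)) b)) = vzero X).
  { transitivity (vsum (S k) (fun j => vsum k (fun i => vscal (smul K (z j) (m (a j) i)) (b i)))).
    { apply vsum_ext. intros. unfold lc. rewrite vsum_scal. apply vsum_ext.
      intros. apply vscalA. }
    rewrite vsum_swap. apply vsum_zero'. intros i Hi.
    rewrite <- (vscal_ssum (S k) (fun j => smul K (z j) (m (a j) i))). rewrite (Hs i Hi). apply v_scal0. }
  rewrite E, vadd0. apply (p_vsum0 p Hp). intros. rewrite (p_scal p Hp), Hm. ring.
Qed.

Lemma glb_ex (E : R -> Prop) : (exists x, E x) -> (forall x, E x -> 0 <= x) ->
  exists m, (forall x, E x -> m <= x) /\ (forall eps, 0 < eps -> exists x, E x /\ x < m + eps) /\ 0 <= m.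
Proof.
  intros [x0 Hx0] Hpos.
  destruct (completeness (fun y => E (- y))) as [l [Hub Hlub]].
  { exists 0. intros y Hy. apply Hpos in Hy. lra. }
  { exists (- x0). rewrite Ropp_involutive. auto. }
  exists (- l). split; [|split].
  - intros x Hx. assert (- x <= l) by (apply Hub; rewrite Ropp_involutive; auto). lra.
  - intros eps He. apply NNPP. intro Hn.
    assert (l <= l - eps); [|lra].
    apply Hlub. intros y Hy. destruct (Rle_dec y (l - eps)) as [|Hne]; auto.
    exfalso. apply Hn. exists (- y). split; auto. lra.
  - assert (l <= 0); [|lra]. apply Hlub. intros y Hy. apply Hpos in Hy. lra.
Qed.


Lemma v_sub_swap (y L w : X) : vsub (vsub y L) w = vsub (vsub y w) L.
Proof. unfold vsub. rewrite <- !vaddA, (vaddC (vopp L)). auto. Qed.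

Lemma v_sub_addr (y L w : X) : vsub y (vadd L w) = vsub (vsub y w) L.
Proof. rewrite v_sub_sub. apply v_sub_swap. Qed.

Lemma v_sub_subr (y w L : X) : vsub y (vsub w L) = vadd (vsub y w) L.
Proof. unfold vsub. rewrite v_opp_add, v_opp_opp, vaddA. auto. Qed.

Lemma v_sub_sub_self (y w : X) : vsub y (vsub y w) = w.
Proof. rewrite v_sub_subr, v_subv. apply v_add0l. Qed.

Lemma lc_opp k c b : lc k (fun i => sopp K (c i)) b = vopp (lc k c b).
Proof. rewrite v_opp_scal, lc_scal. apply lc_ext. intros. split; auto. ring. Qed.

Lemma closed_lemma (b : nat -> X) k : forall y, approxk k b y -> exactk k b y.
Proof.
  induction k; intros y Hy.
  - exists (fun _ => s0 K). unfold lc. simpl.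
    assert (forall eps, 0 < eps -> p (vsub y (vzero X)) < eps).
    { intros eps He. destruct (Hy eps He) as [c Hc]. exact Hc. }
    pose proof ((p_ge0 p Hp) (vsub y (vzero X))).
    destruct (Rle_lt_or_eq_dec _ _ H0) as [Hl|Hl]; auto.
    specialize (H _ Hl). lra.
  - destruct (classic (approxk k b (b k))) as [HA|HB].
    + destruct (IHk _ HA) as [e He].
      assert (Hy' : approxk k b y).
      { intros eps Heps. destruct (Hy eps Heps) as [c Hc].
        exists (fun i => sadd K (c i) (smul K (c k) (e i))).
        rewrite lc_add, <- lc_scal.
        replace (vsub y (vadd (lc k c b) (vscal (c k) (lc k e b))))
          with (vadd (vsub y (lc (S k) c b)) (vscal (c k) (vsub (b k) (lc k e b)))).
        - eapply Rle_lt_trans. apply (p_tri p Hp). rewrite (p_scal p Hp), He. lra.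
        - rewrite lc_S, !v_sub_sub, v_sub_scal. symmetry. apply v_sub_mid. }
      destruct (IHk _ Hy') as [c Hc].
      exists (fun i => if Nat.eqb i k then s0 K else c i).
      rewrite lc_S, Nat.eqb_refl, v_scal0, vadd0.
      rewrite (lc_ext k _ c b b); auto.
      intros i Hi. split; auto. destruct (Nat.eqb i k) eqn:E; auto. apply Nat.eqb_eq in E. lia.
    + assert (Hd : exists delta, 0 < delta /\ forall c, delta <= p (vsub (b k) (lc k c b))).
      { apply NNPP. intro Hn. apply HB. intros eps He. apply NNPP. intro Hn2. apply Hn.
        exists eps. split; auto. intro c. apply Rnot_lt_le. intro Hl. apply Hn2. exists c. auto. }
      destruct Hd as [delta [Hdel Hd]].
      pose (Et := fun t r => exists c, r = p (vsub (vsub y (vscal t (b k))) (lc k c b))).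
      assert (HD : forall t, exists m, (forall x, Et t x -> m <= x) /\
                 (forall eps, 0 < eps -> exists x, Et t x /\ x < m + eps) /\ 0 <= m).
      { intro t. apply glb_ex. exists (p (vsub (vsub y (vscal t (b k))) (lc k (fun _ => s0 K) b))).
        exists (fun _ => s0 K). auto. intros x [c ->]. apply (p_ge0 p Hp). }
      destruct (functional_choice _ HD) as [D HDs].
      destruct (@k_compact K KF D (p (b k)) ((1 + p y) / delta)) as [t Ht].
      * intro t. apply (HDs t).
      * intros t t'. destruct (HDs t) as [Dl _]. destruct (HDs t') as [_ [Dg _]].
        apply Rnot_lt_le. intro Hlt.
        set (g := D t - (D t' + p (b k) * sabs K (sadd K t (sopp K t')))) in *.
        destruct (Dg g) as [r [[c ->] Hr]]. unfold g; lra.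
        assert (Hle := Dl _ (ex_intro _ c eq_refl)).
        assert (p (vsub (vsub y (vscal t (b k))) (lc k c b)) <=
                p (vsub (vsub y (vscal t' (b k))) (lc k c b)) + p (b k) * sabs K (sadd K t (sopp K t'))).
        { rewrite (v_sub_swap y (vscal t (b k))), (v_sub_swap y (vscal t' (b k))).
          rewrite (v_sub_mid _ (vscal t' (b k))).
          eapply Rle_trans. apply (p_tri p Hp). apply Rplus_le_compat_l.
          rewrite <- v_scal_sub_s, (p_scal p Hp).
          replace (sadd K t' (sopp K t)) with (sopp K (sadd K t (sopp K t'))) by ring.
          rewrite (k_abs_opp KF). lra. }
        unfold g in Hr. lra.
      * intros eps Heps.
        destruct (Hy (Rmin eps 1)) as [c Hc]. apply Rmin_pos; lra.
        destruct (HDs (c k)) as [Dl _].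
        assert (HDc : D (c k) < Rmin eps 1).
        { eapply Rle_lt_trans; [apply Dl|]. exists c. reflexivity.
          rewrite <- v_sub_addr, <- lc_S. exact Hc. }
        exists (c k). split; [| pose proof (Rmin_l eps 1); lra].
        assert (Hlow : sabs K (c k) * delta - p y <= D (c k)).
        { destruct (HDs (c k)) as [_ [Dg _]].
          apply Rnot_lt_le. intro Hlt.
          destruct (Dg (sabs K (c k) * delta - p y - D (c k))) as [r [[c' ->] Hr]]. lra.
          assert (Hm : sabs K (c k) * delta <= p (vadd (vscal (c k) (b k)) (lc k c' b))).
          { destruct (classic (c k = s0 K)) as [Hz|Hz].
            - rewrite Hz, (k_abs0 KF). rewrite Rmult_0_l. apply (p_ge0 p Hp).
            - replace (vadd (vscal (c k) (b k)) (lc k c' b)) with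
                (vscal (c k) (vsub (b k) (lc k (fun i => sopp K (smul K (kinv KF (c k)) (c' i))) b))).
              + rewrite (p_scal p Hp). apply Rmult_le_compat_l. apply (k_abs_ge0 KF). apply Hd.
              + rewrite v_sub_scal, lc_scal.
                rewrite (lc_ext k _ (fun i => sopp K (c' i)) b b).
                * rewrite lc_opp. unfold vsub. rewrite v_opp_opp. auto.
                * intros i Hi. split; auto.
                  transitivity (sopp K (smul K (smul K (c k) (kinv KF (c k))) (c' i))). ring.
                  rewrite (k_inv KF Hz). ring. }
          assert (Hq : p (vadd (vscal (c k) (b k)) (lc k c' b)) <=
                       p y + p (vsub (vsub y (vscal (c k) (b k))) (lc k c' b))).
          { rewrite <- (v_sub_sub_self y (vscal (c k) (b k))) at 1.
            rewrite <- v_sub_subr. apply (p_sub p Hp). }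
          lra. }
        apply Rlt_le. apply (Rmult_lt_reg_r delta). auto.
        unfold Rdiv. rewrite Rmult_assoc, Rinv_l, Rmult_1_r by lra.
        pose proof (Rmin_r eps 1). lra.
      * assert (Hyt : approxk k b (vsub y (vscal t (b k)))).
        { intros eps Heps. destruct (HDs t) as [_ [Dg _]]. destruct (Dg eps Heps) as [r [[c ->] Hr]].
          exists c. lra. }
        destruct (IHk _ Hyt) as [c Hc].
        exists (fun i => if Nat.eqb i k then t else c i).
        rewrite lc_S, Nat.eqb_refl, v_sub_addr.
        rewrite (lc_ext k _ c b b); auto.
        intros i Hi. split; auto. destruct (Nat.eqb i k) eqn:E; auto. apply Nat.eqb_eq in E. lia.
Qed.


Lemma lin_lower k b v delta (Hd : forall c, delta <= p (vsub v (lc k c b))) s c :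
  sabs K s * delta <= p (vadd (vscal s v) (lc k c b)).
Proof.
  destruct (classic (s = s0 K)) as [Hz|Hz].
  - subst. rewrite (k_abs0 KF), Rmult_0_l. apply (p_ge0 p Hp).
  - replace (vadd (vscal s v) (lc k c b)) with
        (vscal s (vsub v (lc k (fun i => sopp K (smul K (kinv KF s) (c i))) b))).
    + rewrite (p_scal p Hp). apply Rmult_le_compat_l. apply (k_abs_ge0 KF). apply Hd.
    + rewrite v_sub_scal, lc_scal.
      rewrite (lc_ext k _ (fun i => sopp K (c i)) b b).
      * rewrite lc_opp. unfold vsub. rewrite v_opp_opp. auto.
      * intros i Hi. split; auto.
        transitivity (sopp K (smul K (smul K s (kinv KF s)) (c i))). ring.
        rewrite (k_inv KF Hz). ring.
Qed.

Variable q : nat -> X -> R.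
Variable Hq : forall n, is_seminorm (q n).

Definition ball n x eps := fun y => forall k, (k <= n)%nat -> q k (vsub y x) < eps.

Lemma ball_gap n x y eps : ball n x eps y ->
  exists r, 0 < r /\ forall k, (k <= n)%nat -> r <= eps - q k (vsub y x).
Proof.
  intro H. induction n.
  - exists (eps - q 0%nat (vsub y x)). split. specialize (H 0%nat (le_n 0)). lra.
    intros k Hk. replace k with 0%nat by lia. lra.
  - destruct IHn as [r [Hr Hk]]. intros k Hk. apply H. lia.
    exists (Rmin r (eps - q (S n) (vsub y x))). split.
    apply Rmin_pos; auto. specialize (H (S n) (le_n _)). lra.
    intros k Hk'. destruct (Nat.eq_dec k (S n)) as [->|Hne]. apply Rmin_r.
    eapply Rle_trans. apply Rmin_l. apply Hk. lia.
Qed.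

Lemma ball_open n x eps : is_open q (ball n x eps).
Proof.
  intros y Hy. destruct (ball_gap n x y eps Hy) as [r [Hr Hk]].
  exists n, r. split; auto. intros z Hz k Hkn.
  eapply Rle_lt_trans. apply (p_mid (q k) (Hq k) z y x).
  specialize (Hz k Hkn). specialize (Hk k Hkn). lra.
Qed.

Lemma ball_center n x eps : 0 < eps -> ball n x eps x.
Proof. intros He k Hk. rewrite v_subv, (p_zero (q k) (Hq k)). auto. Qed.

Variable Hpc : continuous_fun q p.
Variable A : X -> Prop.
Variable HAd : dense q A.
Variable Hnt : nontrivial p.

Fixpoint qs (n : nat) (v : X) : R :=
  match n with O => q 0%nat v | S m => qs m v + q (S m) v end.

Lemma qs_ge n v k : (k <= n)%nat -> q k v <= qs n v.
Proof.
  induction n; intro Hk; simpl.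
  - replace k with 0%nat by lia. lra.
  - destruct (Nat.eq_dec k (S n)) as [->|Hne].
    + pose proof (p_ge0 (q O) (Hq O) v). assert (0 <= qs n v).
      { clear IHn Hk. induction n; simpl; auto. pose proof (p_ge0 (q (S n)) (Hq (S n)) v). lra. }
      lra.
    + pose proof (p_ge0 (q (S n)) (Hq (S n)) v). specialize (IHn ltac:(lia)). lra.
Qed.

Lemma qs_ge0 n v : 0 <= qs n v.
Proof. eapply Rle_trans. apply (p_ge0 (q O) (Hq O) v). apply qs_ge. lia. Qed.

Lemma v_ident1 (x w Lc Lc' : X) :
  vsub (vsub (vadd x w) Lc) (vsub x Lc') = vsub w (vsub Lc Lc').
Proof.
  unfold vsub. rewrite !v_opp_add, !v_opp_opp.
  rewrite <- !vaddA. rewrite (vaddC x). rewrite <- !vaddA. f_equal.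
  f_equal. rewrite (vaddC Lc' x), vaddA, (vaddC (vopp x)), vaddN. apply v_add0l.
Qed.

Lemma key_lemma (b : nat -> X) k U : is_open q U -> (exists x, U x) ->
  exists a, A a /\ U a /\ forall c, p (vsub a (lc k c b)) <> 0.
Proof.
  intros HU [x Hx].
  destruct (dim_lemma Hnt k b) as [v Hv].
  assert (Hd : exists delta, 0 < delta /\ forall c, delta <= p (vsub v (lc k c b))).
  { apply NNPP. intro Hn. apply Hv. apply closed_lemma. intros eps He. apply NNPP. intro Hn2. apply Hn.
    exists eps. split; auto. intro c. apply Rnot_lt_le. intro Hl. apply Hn2. exists c. auto. }
  destruct Hd as [delta [Hdel Hd]].
  assert (Hyg : exists y gam, U y /\ 0 < gam /\ forall c, gam <= p (vsub y (lc k c b))).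
  { destruct (classic (approxk k b x)) as [Hax|Hnx].
    - destruct (HU x Hx) as [n0 [e0 [He0 Hb]]].
      set (t := e0 / (2 * (1 + qs n0 v))).
      pose proof (qs_ge0 n0 v) as Hqs.
      assert (Ht : 0 < t) by (unfold t; apply Rdiv_lt_0_compat; lra).
      exists (vadd x (vscal (kemb KF t) v)), (t * delta / 2). split; [|split].
      + apply Hb. intros j Hj. rewrite v_add_sub, (p_scal (q j) (Hq j)), (k_emb KF) by lra.
        pose proof (qs_ge n0 v j Hj).
        apply Rle_lt_trans with (t * qs n0 v). apply Rmult_le_compat_l; lra.
        unfold t. apply (Rmult_lt_reg_r (2 * (1 + qs n0 v))). lra.
        field_simplify; try lra. assert (0 <= e0 * qs n0 v) by (apply Rmult_le_pos; lra). lra.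
      + assert (0 < t * delta) by (apply Rmult_lt_0_compat; lra). lra.
      + destruct (Hax (t * delta / 2)) as [c' Hc']. assert (0 < t * delta) by (apply Rmult_lt_0_compat; lra). lra.
        intro c.
        pose proof (p_sub p Hp (vsub (vadd x (vscal (kemb KF t) v)) (lc k c b)) (vsub x (lc k c' b))) as H1.
        rewrite v_ident1, <- lc_sub in H1.
        unfold vsub at 1 in H1. rewrite <- lc_opp in H1.
        pose proof (lin_lower k b v delta Hd (kemb KF t)
           (fun i => sopp K (sadd K (c i) (sopp K (c' i))))) as H2.
        rewrite (k_emb KF) in H2 by lra. lra.
    - exists x. apply NNPP. intro Hn. apply Hnx. intros eps He. apply NNPP. intro Hn2. apply Hn.
      exists eps. split; auto. split; auto. intro c. apply Rnot_lt_le. intro Hl. apply Hn2. exists c. auto. }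
  destruct Hyg as [y [gam [HUy [Hgam Hy]]]].
  set (W := fun z => U z /\ p (vsub z y) < gam / 2).
  assert (HW : is_open q W).
  { intros z0 [HU0 Hp0].
    destruct (HU z0 HU0) as [n1 [e1 [He1 Hb1]]].
    destruct (Hpc (vzero X) (gam / 2 - p (vsub z0 y))) as [n2 [d2 [Hd2 Hc2]]]. lra.
    exists (max n1 n2), (Rmin e1 d2). split. apply Rmin_pos; auto.
    intros z Hz. split.
    - apply Hb1. intros j Hj. eapply Rlt_le_trans. apply Hz. lia. apply Rmin_l.
    - assert (Hpz : p (vsub z z0) < gam / 2 - p (vsub z0 y)).
      { specialize (Hc2 (vsub z z0)). rewrite (p_zero p Hp), Rminus_0_r in Hc2.
        rewrite <- (Rabs_pos_eq (p (vsub z z0))) by apply (p_ge0 p Hp). apply Hc2.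
        intros j Hj. rewrite v_sub0. eapply Rlt_le_trans. apply Hz. lia. apply Rmin_r. }
      pose proof (p_mid p Hp z z0 y). lra. }
  destruct (HAd W HW) as [a [HAa [HUa Hpa]]].
  { exists y. split; auto. rewrite v_subv, (p_zero p Hp). lra. }
  exists a. split; auto. split; auto. intros c Hc.
  pose proof (p_mid p Hp y a (lc k c b)). rewrite (p_sym p Hp y a), Hc in H.
  specialize (Hy c). lra.
Qed.


Lemma scal_decomp k (b : nat -> X) v s c : s <> s0 K ->
  vadd (vscal s v) (lc k c b) =
  vscal s (vsub v (lc k (fun i => sopp K (smul K (kinv KF s) (c i))) b)).
Proof.
  intro Hz. symmetry. rewrite v_sub_scal, lc_scal.
  rewrite (lc_ext k _ (fun i => sopp K (c i)) b b).
  - rewrite lc_opp. unfold vsub. rewrite v_opp_opp. auto.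
  - intros i Hi. split; auto.
    transitivity (sopp K (smul K (smul K s (kinv KF s)) (c i))). ring.
    rewrite (k_inv KF Hz). ring.
Qed.

Lemma lc_ind k j w (b : nat -> X) : (j < k)%nat ->
  lc k (fun i => if Nat.eqb i j then w else s0 K) b = vscal w (b j).
Proof.
  intro Hj. unfold lc. rewrite <- (vsum_ind k j (vscal w (b j)) Hj). apply vsum_ext.
  intros i Hi. destruct (Nat.eqb i j) eqn:E. apply Nat.eqb_eq in E. subst. auto. apply v_scal0.
Qed.

Lemma collect (bb : nat -> X) k n (g : nat -> X) :
  (forall i, (i < n)%nat -> g i = vzero X \/ exists w j, (j < k)%nat /\ g i = vscal w (bb j)) ->
  exists c, vsum n g = lc k c bb.
Proof.
  induction n; intro H.
  - exists (fun _ => s0 K). rewrite lc_zero. auto.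
  - destruct IHn as [c Hc]. intros; apply H; lia.
    simpl. rewrite Hc. destruct (H n (Nat.lt_succ_diag_r n)) as [E | [w [j [Hj E]]]]; rewrite E.
    + exists c. apply vadd0.
    + exists (fun i => sadd K (c i) (if Nat.eqb i j then w else s0 K)).
      rewrite lc_add, lc_ind; auto.
Qed.

Lemma exists_max (s : nat -> nat) n : (1 <= n)%nat ->
  exists i0, (i0 < n)%nat /\ forall i, (i < n)%nat -> (s i <= s i0)%nat.
Proof.
  intro Hn. induction n. lia.
  destruct (Nat.eq_dec n 0) as [->|Hn0].
  - exists 0%nat. split. lia. intros i Hi. replace i with 0%nat by lia. lia.
  - destruct IHn as [i0 [Hi0 Hm]]. lia.
    destruct (Nat.le_gt_cases (s n) (s i0)).
    + exists i0. split. lia. intros i Hi. destruct (Nat.eq_dec i n) as [->|]; auto. apply Hm. lia.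
    + exists n. split. lia. intros i Hi. destruct (Nat.eq_dec i n) as [->|]; auto.
      specialize (Hm i ltac:(lia)). lia.
Qed.

Theorem main_gen (HAc : countable A) :
  exists B : X -> Prop, (forall x, B x -> A x) /\ p_independent p B /\ dense q B.
Proof.
  destruct HAc as [f Hf].
  pose (V := fun k => let (m, r) := Cantor.of_nat k in let (n, j) := Cantor.of_nat r in
                       ball n (f m) (/ (INR j + 1))).
  assert (HV : forall k, is_open q (V k) /\ exists x, V k x).
  { intro k. unfold V. destruct (Cantor.of_nat k) as [m r]. destruct (Cantor.of_nat r) as [n j].
    split. apply ball_open. exists (f m). apply ball_center.
    apply Rinv_0_lt_compat. pose proof (pos_INR j). lra. }
  assert (Hpick : exists pick : (nat -> X) * nat -> X, forall gk,
     A (pick gk) /\ V (snd gk) (pick gk) /\ forall c, p (vsub (pick gk) (lc (snd gk) c (fst gk))) <> 0).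
  { apply (functional_choice (fun (gk : (nat -> X) * nat) a =>
      A a /\ V (snd gk) a /\ forall c, p (vsub a (lc (snd gk) c (fst gk))) <> 0)). intros [g k]. simpl.
    destruct (HV k) as [Ho Hne].
    destruct (key_lemma g k (V k) Ho Hne) as [a [Ha1 [Ha2 Ha3]]]. exists a. auto. }
  destruct Hpick as [pick Hpick].
  pose (F := fix F (k : nat) : nat -> X := match k with
              | O => fun _ => vzero X
              | S k' => fun i => if Nat.eqb i k' then pick (F k', k') else F k' i end).
  pose (bb := fun i => pick (F i, i)).
  assert (Hstab : forall j i, (i < j)%nat -> F j i = bb i).
  { induction j; intros i Hi. lia. simpl. destruct (Nat.eqb i j) eqn:E.
    - apply Nat.eqb_eq in E. subst. reflexivity.
    - apply Nat.eqb_neq in E. apply IHj. lia. }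
  assert (Hbb : forall k, A (bb k) /\ V k (bb k) /\ forall c, p (vsub (bb k) (lc k c bb)) <> 0).
  { intro k. destruct (Hpick (F k, k)) as [H1 [H2 H3]]. simpl in *. split; auto. split; auto.
    intro c. rewrite (lc_ext k c c bb (F k)). apply H3.
    intros i Hi. split; auto. symmetry. apply Hstab. auto. }
  exists (fun x => exists k, bb k = x). split; [|split].
  - intros x [k <-]. apply Hbb.
  - intros n a z Hn Ha Hdist Hz.
    assert (Hs : exists s : nat -> nat, forall i, (i < n)%nat -> bb (s i) = a i).
    { apply (functional_choice (fun i k => (i < n)%nat -> bb k = a i)). intro i.
      destruct (Nat.lt_ge_cases i n) as [Hi|Hi].
      - destruct (Ha i Hi) as [k Hk]. exists k. auto.
      - exists O. intro; lia. }
    destruct Hs as [s Hs].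
    destruct (exists_max s n Hn) as [i0 [Hi0 Hmax]].
    assert (Hlt : forall i, (i < n)%nat -> i <> i0 -> (s i < s i0)%nat).
    { intros i Hi Hne. specialize (Hmax i Hi). destruct (Nat.eq_dec (s i) (s i0)) as [E|E]; [|lia].
      exfalso. apply (Hdist i i0 Hi Hi0 Hne). rewrite <- (Hs i Hi), <- (Hs i0 Hi0), E. auto. }
    pose (g := fun i => if Nat.eqb i i0 then vzero X else vscal (z i) (bb (s i))).
    destruct (collect bb (s i0) n g) as [c Hc].
    { intros i Hi. unfold g. destruct (Nat.eqb i i0) eqn:E. left; auto. right.
      apply Nat.eqb_neq in E. exists (z i), (s i). split; auto. }
    assert (Hsum : vsum n (fun i => vscal (z i) (a i)) = vadd (vscal (z i0) (bb (s i0))) (lc (s i0) c bb)).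
    { rewrite <- Hc, vaddC.
      rewrite <- (vsum_ind n i0 (vscal (z i0) (bb (s i0))) Hi0), <- vsum_add.
      apply vsum_ext. intros i Hi. unfold g. rewrite <- (Hs i Hi).
      destruct (Nat.eqb i i0) eqn:E.
      - apply Nat.eqb_eq in E. subst. symmetry. apply v_add0l.
      - symmetry. apply vadd0. }
    rewrite Hsum, (scal_decomp _ _ _ _ _ (Hz i0 Hi0)), (p_scal p Hp).
    intro H0. apply Rmult_integral in H0. destruct H0 as [H0|H0].
    + apply (Hz i0 Hi0). apply (k_abs_eq0 KF). auto.
    + destruct (Hbb (s i0)) as [_ [_ H3]]. apply (H3 _ H0).
  - intros U HU [x Hx].
    destruct (HU x Hx) as [n [eps [Heps Hb]]].
    destruct (HAd (ball n x (eps / 2)) (ball_open n x (eps / 2))) as [a [HAa Hba]].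
    { exists x. apply ball_center. lra. }
    destruct (Hf a HAa) as [m Hm].
    destruct (archimed_cor1 (eps / 2)) as [N [HN HN0]]. lra.
    set (k := Cantor.to_nat (m, Cantor.to_nat (n, pred N))).
    assert (HVk : V k = ball n (f m) (/ (INR (pred N) + 1))).
    { unfold V, k. rewrite !Cantor.cancel_of_to. reflexivity. }
    destruct (Hbb k) as [_ [H2 _]]. rewrite HVk in H2.
    exists (bb k). split. exists k; auto.
    apply Hb. intros i Hi.
    eapply Rle_lt_trans. apply (p_mid (q i) (Hq i) _ a x).
    specialize (H2 i Hi). specialize (Hba i Hi). rewrite Hm in H2.
    replace (INR (pred N) + 1) with (INR N) in H2.
    + lra.
    + destruct N. lia. rewrite S_INR. simpl. auto.
Qed.

End Gen.

Lemma R_compact (D : R -> R) (L M : R) :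
  (forall t, 0 <= D t) ->
  (forall t t', D t <= D t' + L * Rabs (t + - t')) ->
  (forall eps, 0 < eps -> exists t, Rabs t <= M /\ D t < eps) ->
  exists t, D t <= 0.
Proof.
  intros Hpos HL Hsm.
  assert (HM : 0 <= M). { destruct (Hsm 1) as [t [Ht _]]. lra. pose proof (Rabs_pos t). lra. }
  assert (Hc : forall c, continuity_pt D c).
  { intros c eps Heps. exists (eps / (Rabs L + 1)). split.
    - apply Rdiv_lt_0_compat; auto. pose proof (Rabs_pos L). lra.
    - intros x [_ Hx]. simpl in *. unfold Rdist in *.
      pose proof (HL x c). pose proof (HL c x).
      assert (E1 : Rabs (c + - x) = Rabs (x - c)).
      { rewrite <- Rabs_Ropp. f_equal. ring. }
      assert (E2 : Rabs (x + - c) = Rabs (x - c)) by (f_equal; ring).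
      rewrite E1 in H0. rewrite E2 in H.
      assert (HLa : L * Rabs (x - c) <= Rabs L * Rabs (x - c)).
      { apply Rmult_le_compat_r. apply Rabs_pos. apply Rle_abs. }
      assert (Hb : Rabs L * Rabs (x - c) < eps).
      { pose proof (Rabs_pos L). pose proof (Rabs_pos (x - c)).
        apply Rle_lt_trans with ((Rabs L + 1) * Rabs (x - c)). nra.
        apply (Rmult_lt_reg_r (/ (Rabs L + 1))). apply Rinv_0_lt_compat; lra.
        rewrite (Rmult_comm (Rabs L + 1)), Rmult_assoc, Rinv_r, Rmult_1_r by lra. exact Hx. }
      apply Rabs_def1; lra. }
  destruct (continuity_ab_min D (- M) M) as [mx [Hmin Hmx]]. lra. intros; apply Hc.
  exists mx. apply Rnot_lt_le. intro Hlt.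
  destruct (Hsm (D mx) Hlt) as [t [Ht Hd]].
  assert (D mx <= D t). apply Hmin. pose proof (Rle_abs t). pose proof (Rle_abs (- t)). rewrite Rabs_Ropp in *. lra. lra.
Qed.

Definition KR : Kfield RK.
Proof.
  refine {| kinv := (fun a : sc RK => Rinv a); kemb := (fun r : R => (r : sc RK)) |}; simpl; intros; try ring.
  - intro H; lra.
  - apply Rinv_r. auto.
  - apply Rabs_R0.
  - destruct (Rcase_abs a); [rewrite Rabs_left in H|rewrite Rabs_right in H]; lra.
  - apply Rabs_pos.
  - apply Rabs_mult.
  - apply Rabs_Ropp.
  - apply Rabs_R1.
  - apply Rabs_pos_eq; auto.
  - eapply R_compact; eauto.
Defined.

Lemma Cmod_real x : Cmod (x, 0) = Rabs x.
Proof. unfold Cmod. simpl. rewrite Rmult_0_l, Rplus_0_r. apply sqrt_Rsqr_abs. Qed.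
Lemma Cmod_imag x : Cmod (0, x) = Rabs x.
Proof. unfold Cmod. simpl. rewrite Rmult_0_l, Rplus_0_l. apply sqrt_Rsqr_abs. Qed.
Lemma Cmod_ge1 a b : Rabs a <= Cmod (a, b).
Proof. rewrite <- sqrt_Rsqr_abs. unfold Cmod. simpl. apply sqrt_le_1_alt. unfold Rsqr. nra. Qed.
Lemma Cmod_ge2 a b : Rabs b <= Cmod (a, b).
Proof. rewrite <- sqrt_Rsqr_abs. unfold Cmod. simpl. apply sqrt_le_1_alt. unfold Rsqr. nra. Qed.

Lemma C_compact (D : Cplx -> R) (L M : R) :
  (forall t, 0 <= D t) ->
  (forall t t', D t <= D t' + L * Cmod (Cadd t (Copp t'))) ->
  (forall eps, 0 < eps -> exists t, Cmod t <= M /\ D t < eps) ->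
  exists t, D t <= 0.
Proof.
  intros Hpos HL Hsm.
  assert (HM : 0 <= M).
  { destruct (Hsm 1) as [[a b] [Ht _]]. lra. pose proof (Cmod_ge1 a b). pose proof (Rabs_pos a). lra. }
  assert (HG : forall t1, exists m, (forall x, (exists t2, Rabs t2 <= M /\ x = D (t1, t2)) -> m <= x) /\
      (forall eps, 0 < eps -> exists x, (exists t2, Rabs t2 <= M /\ x = D (t1, t2)) /\ x < m + eps) /\ 0 <= m).
  { intro t1. apply glb_ex. exists (D (t1, 0)). exists 0. split; auto. rewrite Rabs_R0. auto.
    intros x [t2 [_ ->]]. auto. }
  destruct (functional_choice _ HG) as [G HGs].
  destruct (R_compact G L M) as [t1 Ht1].
  - intro t. apply HGs.
  - intros t t'. apply Rnot_lt_le. intro Hlt.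
    destruct (HGs t) as [Gl _]. destruct (HGs t') as [_ [Gg _]].
    destruct (Gg (G t - (G t' + L * Rabs (t + - t')))) as [x [[t2 [Ht2 ->]] Hx]]. lra.
    assert (G t <= D (t, t2)) by (apply Gl; eauto).
    pose proof (HL (t, t2) (t', t2)). unfold Cadd, Copp in H0. simpl in H0.
    rewrite Rplus_opp_r, Cmod_real in H0. lra.
  - intros eps Heps. destruct (Hsm eps Heps) as [[a b] [Hab Hd]].
    exists a. split. pose proof (Cmod_ge1 a b). lra.
    destruct (HGs a) as [Gl _]. eapply Rle_lt_trans; [|exact Hd]. apply Gl.
    exists b. split; auto. pose proof (Cmod_ge2 a b). lra.
  - destruct (R_compact (fun t2 => D (t1, t2)) L M) as [t2 Ht2].
    + intro; auto.
    + intros t t'. pose proof (HL (t1, t) (t1, t')). unfold Cadd, Copp in H. simpl in H.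
      rewrite Rplus_opp_r, Cmod_imag in H. lra.
    + intros eps Heps. destruct (HGs t1) as [_ [Gg _]]. destruct (Gg eps Heps) as [x [[t2 [Ht2 ->]] Hx]].
      exists t2. split; auto. lra.
    + exists (t1, t2). auto.
Qed.

Lemma Cpair (a b c d : R) : a = c -> b = d -> (a, b) = (c, d).
Proof. intros; subst; auto. Qed.

Definition KC : Kfield CK.
Proof.
  refine {| kinv := (fun z : sc CK => (fst z / (fst z * fst z + snd z * snd z),
                                        - snd z / (fst z * fst z + snd z * snd z)));
            kemb := (fun r : R => ((r, 0) : sc CK)) |}; simpl;
  try (intros; repeat match goal with z : Cplx |- _ => destruct z end;
       unfold Cadd, Cmul, Copp; simpl; apply Cpair; ring).
  - intro H. inversion H. lra.
  - intros [x y] H. unfold Cmul. simpl.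
    assert (Hn : x * x + y * y <> 0).
    { intro E. apply H. assert (x = 0) by nra. assert (y = 0) by nra. subst. auto. }
    apply Cpair; field; auto.
  - unfold Cmod. simpl. rewrite Rmult_0_l, Rplus_0_l. apply sqrt_0.
  - intros [x y] H. unfold Cmod in H. simpl in H.
    apply sqrt_eq_0 in H; [|nra]. assert (x = 0) by nra. assert (y = 0) by nra. subst. auto.
  - intros [x y]. apply sqrt_pos.
  - intros [a b] [c d]. unfold Cmod, Cmul. simpl. rewrite <- sqrt_mult by nra. f_equal. ring.
  - intros [a b]. unfold Cmod, Copp. simpl. f_equal. ring.
  - unfold Cmod. simpl. rewrite Rmult_0_l, Rplus_0_r, Rmult_1_l. apply sqrt_1.
  - intros r Hr. rewrite Cmod_real. apply Rabs_pos_eq. auto.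
  - intros D L M H1 H2 H3. eapply C_compact; eauto.
Defined.

Theorem lemma4p3 (K : Scalars) (HK : K = RK \/ K = CK)
  (X : VectorSpace K) (q : nat -> X -> R)
  (HF : is_frechet q) (Hsep : separable X q)
  (p : X -> R) (Hp : is_seminorm p) (Hpc : continuous_fun q p)
  (Hnt : nontrivial p)
  (A : X -> Prop) (HAd : dense q A) (HAc : countable A) :
  exists B : X -> Prop, (forall x, B x -> A x) /\ p_independent p B /\ dense q B.
Proof.
  destruct HF as [Hq _].
  destruct HK; subst K.
  - exact (main_gen RK KR X p Hp q Hq Hpc A HAd Hnt HAc).
  - exact (main_gen CK KC X p Hp q Hq Hpc A HAd Hnt HAc).
Qed.
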